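(* Let $p\in\mathbb{R}[x_1,\ldots,x_n]_{2e}$ be a globally nonnegative homogeneous polynomial of degree $2e$ which is not a square, and let $h=y^2-p(x)$ where $y$ is a variable of degree $e$. If $h^r=\det(y\cdot I-A)$ for some $r\geq1$ and some real symmetric (resp. complex hermitian) matrix $A$ of size $2r$ whose entries are homogeneous polynomials of degree $e$ in $x_1,\ldots,x_n$, then $p$ is a sum of $2r$ squares in the symmetric case and a sum of $4r-1$ squares in the hermitian case. *)

(* Defs.v *)
From HB Require Import structures.
From mathcomp Require Import all_boot all_order all_algebra.
From mathcomp Require Import mpoly.
From mathcomp Require Import reals.
From mathcomp Require Import complex.
Set Implicit Arguments. Unset Strict Implicit. Unset Printing Implicit Defensive.
Import Order.TTheory GRing.Theory Num.Theory.
Local Open Scope ring_scope.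

Definition globally_nonneg (R : realType) (n : nat) (p : {mpoly R[n]}) : Prop :=
  forall v : 'I_n -> R, 0 <= p.@[v].

Definition is_square_poly (R : realType) (n : nat) (p : {mpoly R[n]}) : Prop :=
  exists q : {mpoly R[n]}, p = q ^+ 2.

Definition sum_of_squares (R : realType) (n k : nat) (p : {mpoly R[n]}) : Prop :=
  exists s : 'I_k -> {mpoly R[n]}, p = \sum_(i < k) (s i) ^+ 2.

(* the polynomial h = y^2 - p(x), seen as a polynomial in y with
   coefficients in R[x_1,...,x_n] *)
Definition hpoly (R : comRingType) (n : nat) (p : {mpoly R[n]}) : {poly {mpoly R[n]}} :=
  'X ^+ 2 - p%:P.

Definition homog_entries (R : ringType) (n m e : nat) (A : 'M[{mpoly R[n]}]_m) : Prop :=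
  forall i j, A i j \is e.-homog.

Definition symmetric_mx (T : Type) (m : nat) (A : 'M[T]_m) : Prop := A^T = A.

Definition hermitian_mx (R : realType) (n m : nat) (A : 'M[{mpoly R[i][n]}]_m) : Prop :=
  A^T = map_mx (map_mpoly (@conjc R)) A.

Definition cplx_mpoly (R : realType) (n : nat) (p : {mpoly R[n]}) : {mpoly R[i][n]} :=
  map_mpoly (real_complex R) p.

(* Main.v *)
Require Import Defs.
From HB Require Import structures.
From mathcomp Require Import all_boot all_order all_algebra.
From mathcomp Require Import mpoly.
From mathcomp Require Import reals.
From mathcomp Require Import complex.
Import Order.TTheory GRing.Theory Num.Theory.
Local Open Scope ring_scope.
From mathcomp Require Import zify.
Lemma mlead_map_le (S : nzRingType) (n : nat) (f : {rmorphism S -> S}) (p : {mpoly S[n]}) :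
  (mlead (map_mpoly f p) <= mlead p)%O.
Proof.
have [->|pn0] := eqVneq (map_mpoly f p) 0; first by rewrite mlead0 le0m.
apply: msupp_le_mlead.
have := mlead_supp pn0; rewrite !mcoeff_msupp mcoeff_map_mpoly.
by apply: contra => /eqP ->; rewrite raddf0.
Qed.

Lemma pos_sum (S : numDomainType) (n k : nat) (f : {rmorphism S -> S})
  (Hf : forall c, c != 0 -> 0 < f c * c) (q : 'I_k -> {mpoly S[n]}) :
  \sum_j map_mpoly f (q j) * q j = 0 -> forall j, q j = 0.
Proof.
move=> H j; apply/eqP; apply/negPn/negP => qj0.
case: (@arg_maxP _ _ _ j (fun i => q i != 0) (fun i => mlead (q i)) qj0) => jm qjm Hmax.
set M := mlead (q jm).
have Hle : forall i, (mlead (q i) <= M)%O.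
  move=> i; have [->|qi0] := eqVneq (q i) 0; first by rewrite mlead0 le0m.
  exact: Hmax.
have Hf0 : forall c, 0 <= f c * c.
  move=> c; have [->|c0] := eqVneq c 0; first by rewrite mulr0.
  exact/ltW/Hf.
have : \sum_i f ((q i)@_M) * (q i)@_M = 0.
  rewrite -[RHS](mcoeff0 _ (M + M)%MM) -H raddf_sum /=.
  apply: eq_bigr => i _.
  by rewrite (mleadcMW (le_trans (mlead_map_le _ _ f (q i)) (Hle i)) (Hle i)) mcoeff_map_mpoly.
move/(psumr_eq0P (fun i _ => Hf0 _))/(_ jm isT)/eqP.
apply/negP; rewrite lt0r_neq0 // Hf // mleadc_eq0 //.
Qed.

Lemma core (T : comNzRingType) (m : nat) (g : {rmorphism T -> T}) (A : 'M[T]_m.+1)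
  (c : T) (r : nat) :
  (forall s : 'I_m.+1 -> T, \sum_j g (s j) * s j = 0 -> forall j, s j = 0) ->
  map_mx g A^T = A -> g c = c -> (0 < r)%N ->
  char_poly A = ('X ^+ 2 - c%:P) ^+ r -> A * A = c%:M.
Proof.
move=> Hg HA Hc r0 Hch.
pose star := fun M : 'M[T]_m.+1 => map_mx g M^T.
have starM : forall M N, star (M * N) = star N * star M.
  by move=> M N; rewrite /star -!mulmxE trmx_mul map_mxM.
have starX : forall M j, star (M ^+ j) = star M ^+ j.
  move=> M; elim=> [|j IH]; first by rewrite /star !expr0 trmx1 map_mx1.
  by rewrite exprS starM IH exprSr.
have zero : forall M, star M * M = 0 -> M = 0.
  move=> M H; apply/matrixP => i j; rewrite [RHS]mxE.
  have := congr1 (fun X : 'M[T]_m.+1 => X j j) H.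
  rewrite -mulmxE !mxE => Hs.
  apply: (Hg (fun k => M k j)) => //.
  by apply: etrans Hs; apply: eq_bigr => k _; rewrite /star !mxE.
set N := A * A - c%:M.
have sN : star N = N.
  rewrite /N /star linearB /= map_mxB.
  have -> : map_mx g (A * A)^T = A * A by rewrite -/(star _) starM /star HA.
  by rewrite tr_scalar_mx map_scalar_mx Hc.
have Nr : N ^+ r = 0.
  have := Cayley_Hamilton A.
  by rewrite Hch rmorphXn rmorphB /= horner_mx_C rmorphXn /= horner_mx_X expr2.
have key : forall k, N ^+ k.+1 = 0 -> N = 0.
  move=> k; elim/ltn_ind: k => k IH Hk.
  case: k IH Hk => [|k] IH Hk; first by rewrite expr1 in Hk.
  set h := (k.+1)./2.
  have hk : (h < k.+1)%N.
    have := odd_double_half k.+1; rewrite -/h -addnn => e.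
    have := leq_b1 (odd k.+1); lia.
  have hh : (k.+2 <= h.+1 + h.+1)%N.
    have := odd_double_half k.+1; rewrite -/h -addnn => e.
    have := leq_b1 (odd k.+1); lia.
  apply: (IH h hk); apply: zero.
  by rewrite starX sN -exprD -(subnKC hh) exprD Hk mul0r.
case: r r0 Nr {Hch} => // r' _ /key NN.
by apply/eqP; rewrite -subr_eq0; apply/eqP.
Qed.

Lemma split_sq (T : comNzRingType) (m : nat) (a b : 'I_m.+1 -> T) :
  b ord0 = 0 ->
  exists s : 'I_(m.+1 + m) -> T,
    \sum_j (a j ^+ 2 + b j ^+ 2) = \sum_i s i ^+ 2.
Proof.
move=> b0.
exists (fun i => if (i < m.+1)%N then a (inord i) else b (inord (i - m))).
rewrite big_split_ord big_split /=; congr (_ + _).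
  apply: eq_bigr => j _; rewrite /= ltn_ord; congr (a _ ^+ 2).
  by apply: val_inj; rewrite /= inordK.
rewrite big_ord_recl b0 expr0n /= add0r.
apply: eq_bigr => j _; rewrite /= ltnNge leq_addr /=; congr (b _ ^+ 2).
apply: val_inj; have jm := ltn_ord j; rewrite /= inordK; last by lia.
by rewrite /bump /=; lia.
Qed.

Lemma map_mpoly_idfun (T : nzRingType) (n : nat) (q : {mpoly T[n]}) :
  map_mpoly (idfun : {rmorphism T -> T}) q = q.
Proof. by apply/mpolyP => m; rewrite mcoeff_map_mpoly. Qed.
From mathcomp Require Import ring.

Lemma conjE (R : realType) (x : R[i]) :
  conjc x = (complex.Re x)%:C%C - 'i%C * (complex.Im x)%:C%C.
Proof.
case: x => a b; apply/eqP; rewrite eq_complex /=.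
by rewrite !(mul0r, mul1r, mulr0, subr0, sub0r, add0r, addr0, oppr0) !eqxx.
Qed.

Lemma cE (R : realType) (x : R[i]) :
  x = (complex.Re x)%:C%C + 'i%C * (complex.Im x)%:C%C.
Proof. exact: complexE. Qed.

Lemma im_real (R : realType) (x : R[i]) : x = conjc x -> complex.Im x = 0.
Proof.
case: x => a b [] /= H.
have : b + b = 0 by rewrite {2}H subrr.
by rewrite -mulr2n => /eqP; rewrite mulrn_eq0 /= => /eqP.
Qed.

Lemma ring_id (T : comNzRingType) (a b c : T) :
  (a + c * b) * (a - c * b) = a ^+ 2 - (c * c) * b ^+ 2.
Proof. ring. Qed.

Section Cplx.
Variables (R : realType) (n : nat).
Definition reP (q : {mpoly R[i][n]}) : {mpoly R[n]} := map_mpoly (@complex.Re R) q.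
Definition imP (q : {mpoly R[i][n]}) : {mpoly R[n]} := map_mpoly (@complex.Im R) q.
Definition IP : {mpoly R[i][n]} := ('i%C)%:MP_[n].

Lemma decP (q : {mpoly R[i][n]}) :
  q = cplx_mpoly (reP q) + IP * cplx_mpoly (imP q).
Proof.
apply/mpolyP => m.
rewrite mcoeffD mcoeffCM /cplx_mpoly.
rewrite {1}(@cE R (q@_m)).
congr (_ + _ * _).
  rewrite mcoeff_map_mpoly.
  by rewrite /reP mcoeff_map_mpoly.
by rewrite mcoeff_map_mpoly /imP mcoeff_map_mpoly.
Qed.

Lemma conjP (q : {mpoly R[i][n]}) :
  map_mpoly (@conjc R) q = cplx_mpoly (reP q) - IP * cplx_mpoly (imP q).
Proof.
apply/mpolyP => m.
rewrite mcoeffB mcoeffCM /cplx_mpoly.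
rewrite {1}mcoeff_map_mpoly; rewrite -[LHS]/(conjc (q@_m)) (@conjE R (q@_m)).
congr (_ - _ * _).
  by rewrite mcoeff_map_mpoly /reP mcoeff_map_mpoly.
by rewrite mcoeff_map_mpoly /imP mcoeff_map_mpoly.
Qed.

Lemma IP2 : IP * IP = -1.
Proof. by rewrite /IP -mpolyCM -expr2 sqr_i mpolyCN mpolyC1. Qed.

Lemma cplx_sq (x y : {mpoly R[n]}) :
  cplx_mpoly (x ^+ 2 + y ^+ 2) = cplx_mpoly x ^+ 2 + cplx_mpoly y ^+ 2.
Proof.
rewrite /cplx_mpoly rmorphD.
by congr (_ + _); apply: rmorphXn.
Qed.



Lemma prodP (q : {mpoly R[i][n]}) :
  q * map_mpoly (@conjc R) q = cplx_mpoly (reP q ^+ 2 + imP q ^+ 2).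
Proof.
rewrite conjP {1}[q]decP cplx_sq.
move: (cplx_mpoly (reP q)) (cplx_mpoly (imP q)) => a b.
by rewrite ring_id IP2 mulN1r opprK.
Qed.

Lemma conj_cplx (q : {mpoly R[n]}) :
  map_mpoly (@conjc R) (cplx_mpoly q) = cplx_mpoly q.
Proof.
apply/mpolyP => m; rewrite /cplx_mpoly {1}mcoeff_map_mpoly.
rewrite -[LHS]/(conjc _) !mcoeff_map_mpoly.
by apply/eqP; rewrite eq_complex /= oppr0 !eqxx.
Qed.

Lemma conj_inv (q : {mpoly R[i][n]}) :
  map_mpoly (@conjc R) (map_mpoly (@conjc R) q) = q.
Proof.
apply/mpolyP => m; rewrite {1}mcoeff_map_mpoly.
rewrite -[LHS]/(conjc _) mcoeff_map_mpoly.
exact: conjcK.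
Qed.

Lemma cplx_inj : injective (@cplx_mpoly R n).
Proof.
move=> q1 q2 H; apply/mpolyP => m.
have := congr1 (fun q => q@_m) H; rewrite /cplx_mpoly /=.
rewrite {1}mcoeff_map_mpoly. rewrite [in X in _ = X -> _]mcoeff_map_mpoly.
by case.
Qed.
End Cplx.
Arguments reP {R n}.
Arguments imP {R n}.

Theorem lemma9p4 (R : realType) (n e r : nat) (p : {mpoly R[n]}) :
  p \is (2 * e)%N.-homog ->
  globally_nonneg p ->
  ~ is_square_poly p ->
  (0 < r)%N ->
  (forall A : 'M[{mpoly R[n]}]_(2 * r),
      homog_entries e A -> symmetric_mx A ->
      hpoly p ^+ r = char_poly A ->
      sum_of_squares (2 * r) p)
  /\
  (forall A : 'M[{mpoly R[i][n]}]_(2 * r),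
      homog_entries e A -> hermitian_mx A ->
      hpoly (cplx_mpoly p) ^+ r = char_poly A ->
      sum_of_squares (4 * r - 1) p).
Proof.
move=> _ _ _ r0.
case: r r0 => // r' _.
set K := (2 * r'.+1)%N.
split.
- move=> A _ HS Hch; rewrite /symmetric_mx in HS.
  have Hg : forall s : 'I_K.-1.+1 -> {mpoly R[n]},
      \sum_j (idfun : {rmorphism _ -> _}) (s j) * s j = 0 -> forall j, s j = 0.
    move=> s Hs j.
    apply: (@pos_sum R n K.-1.+1 idfun) => [c c0|]; first by rewrite /= lt0r mulf_neq0 //= -expr2 sqr_ge0.
    by rewrite -[RHS]Hs; apply: eq_bigr => i _; rewrite map_mpoly_idfun.
  have AA := @core _ K.-1 idfun A p r'.+1 Hg.
  have {AA} AA : A * A = p%:M.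
    apply: AA => //.
    by apply/matrixP => i j; rewrite !mxE /= -[A in LHS]HS mxE.
  exists (fun j => A ord0 j).
  have := congr1 (fun X : 'M__ => X ord0 ord0) AA.
  rewrite -mulmxE !mxE /= mulr1n => <-.
  apply: eq_bigr => j _; rewrite expr2; congr (_ * _).
  by rewrite -[A in LHS]HS mxE.
- move=> A _ HH Hch; rewrite /hermitian_mx in HH.
  pose g := (map_mpoly (@conjc R) : {rmorphism {mpoly R[i][n]} -> {mpoly R[i][n]}}).
  have Hg : forall s : 'I_K.-1.+1 -> {mpoly R[i][n]},
      \sum_j g (s j) * s j = 0 -> forall j, s j = 0.
    move=> s Hs j.
    apply: (@pos_sum R[i] n K.-1.+1 conjc) => [c c0|]; last exact: Hs.
    by rewrite mulrC lt0r mulf_neq0 ?conjc_eq0 //= mulcJ_ge0.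
  have AA : A * A = (cplx_mpoly p)%:M.
    have HA : map_mx g A^T = A.
      by apply/matrixP => i j; rewrite mxE HH mxE; exact: conj_inv.
    have Hc : g (cplx_mpoly p) = cplx_mpoly p by exact: conj_cplx.
    have Hch' : char_poly A = ('X ^+ 2 - (cplx_mpoly p)%:P) ^+ r'.+1 by exact: esym Hch.
    exact: (@core _ K.-1 g A (cplx_mpoly p) r'.+1 Hg HA Hc (ltn0Sn _) Hch').
  have E00 := congr1 (fun X : 'M__ => X ord0 ord0) AA.
  rewrite -mulmxE !mxE /= mulr1n in E00.
  have Aj : forall j, A j ord0 = g (A ord0 j).
    by move=> j; have := congr1 (fun X : 'M[{mpoly R[i][n]}]_(K.-1.+1) => X ord0 j) HH; rewrite !mxE.
  have Ep : p = \sum_j (reP (A ord0 j) ^+ 2 + imP (A ord0 j) ^+ 2).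
    apply: cplx_inj; rewrite -E00 /cplx_mpoly rmorph_sum.
    by apply: eq_bigr => j _; rewrite Aj; exact: prodP.
  have b0 : imP (A ord0 ord0) = 0.
    apply/mpolyP => m; rewrite mcoeff0 /imP mcoeff_map_mpoly; apply: im_real.
    by rewrite {1}(Aj ord0); exact: (mcoeff_map_mpoly (@conjc R)).
  have [s Hs] := @split_sq _ K.-1 (fun j => reP (A ord0 j)) (fun j => imP (A ord0 j)) b0.
  have -> : (4 * r'.+1 - 1)%N = (K.-1.+1 + K.-1)%N by rewrite /K; lia.
  by exists s; rewrite Ep Hs.
Qed.
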